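(* Let $T\in\mathbb{R}^{n\times n\times n}$ with trilinear form $f(x,y,z)=\sum_{i,j,k}T_{ijk}x_iy_jz_k$ and $z$-slices $Z_1,\dots,Z_n$. Then $f$ can be written $f(x,y,z)=g(Ax,By,Cz)$ with $A,B\in M_n(\mathbb{R})$ orthogonal, $C\in M_n(\mathbb{R})$ arbitrary, and $g(x,y,z)=\sum_{i=1}^n\alpha_ix_iy_iz_i$ ($\alpha_i\in\mathbb{R}$), if and only if the matrices $Z_kZ_l^T$ and $Z_k^TZ_l$ are symmetric for all $k,l\in\{1,\dots,n\}$.
   Context: The $z$-slices of $T$ are the matrices $Z_k=(T_{ijk})_{1\le i,j\le n}$, i.e. the matrices of the bilinear forms $\partial f/\partial z_k$ in $(x,y)$. A real matrix $A$ is orthogonal if $A^TA=\mathrm{Id}$. *)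

(* Defs.v *)
(* Reals are modelled by an arbitrary real closed field. *)
From HB Require Import structures.
From mathcomp Require Import all_boot all_order all_algebra.
Set Implicit Arguments. Unset Strict Implicit. Unset Printing Implicit Defensive.
Import Order.TTheory GRing.Theory Num.Theory.
Local Open Scope ring_scope.

Definition trilin {R : rcfType} {n : nat} (T : 'I_n -> 'I_n -> 'I_n -> R)
  (x y z : 'cV[R]_n) : R :=
  \sum_(i < n) \sum_(j < n) \sum_(k < n) T i j k * x i 0 * y j 0 * z k 0.

Definition diag_trilin {R : rcfType} {n : nat} (alpha : 'I_n -> R)
  (x y z : 'cV[R]_n) : R :=
  \sum_(i < n) alpha i * x i 0 * y i 0 * z i 0.

Definition zslice {R : rcfType} {n : nat} (T : 'I_n -> 'I_n -> 'I_n -> R)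
  (k : 'I_n) : 'M[R]_n := \matrix_(i, j) T i j k.

Definition orthogonal_mx {R : rcfType} {n : nat} (A : 'M[R]_n) : Prop :=
  A^T *m A = 1%:M.

Definition symmetric_mx {R : rcfType} {n : nat} (M : 'M[R]_n) : Prop :=
  M^T = M.

(* Main.v *)
Require Import Defs.
From HB Require Import structures.
From mathcomp Require Import all_boot all_order all_algebra.
From mathcomp.real_closed Require Import complex.
From mathcomp Require Import ring.
Set Implicit Arguments. Unset Strict Implicit. Unset Printing Implicit Defensive.
Import Order.TTheory GRing.Theory Num.Theory.
Local Open Scope ring_scope.

Section C.
Variable R : rcfType.

Lemma ReD (x y : R[i]) : complex.Re (x + y) = complex.Re x + complex.Re y. Proof. by case: x => a b; case: y => c d. Qed.
Lemma ImD (x y : R[i]) : complex.Im (x + y) = complex.Im x + complex.Im y. Proof. by case: x => a b; case: y => c d. Qed.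
Lemma Re0 : complex.Re (0 : R[i]) = 0. Proof. by []. Qed.
Lemma Im0 : complex.Im (0 : R[i]) = 0. Proof. by []. Qed.
Lemma ReM (x y : R[i]) : complex.Re (x * y) = complex.Re x * complex.Re y - complex.Im x * complex.Im y. Proof. by case: x => a b; case: y => c d. Qed.
Lemma ImM (x y : R[i]) : complex.Im (x * y) = complex.Re x * complex.Im y + complex.Im x * complex.Re y. Proof. by case: x => a b; case: y => c d. Qed.

Lemma cplx_eig r (M : 'M[R]_r) : (0 < r)%N -> exists (a b : R) (p q : 'rV[R]_r),
  (p != 0 \/ q != 0) /\ p *m M = a *: p - b *: q /\ q *m M = b *: p + a *: q.
Proof.
move=> r0.
pose Mc := map_mx (real_complex R) M.
have : size (char_poly Mc) != 1%N by rewrite size_char_poly; case: r r0 {M Mc}.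
move/closed_rootP => [mu]; rewrite -eigenvalue_root_char => /eigenvalueP [w Hw w0].
exists (complex.Re mu), (complex.Im mu), (map_mx (@complex.Re R) w), (map_mx (@complex.Im R) w).
have Hj j : \sum_i w 0 i * (M i j)%:C%C = mu * w 0 j.
  by have := congr1 (fun A : 'rV__ => A 0 j) Hw; rewrite !mxE => <-; apply: eq_bigr => i _; rewrite mxE.
split; last split.
- have [p0|] := eqVneq (map_mx (@complex.Re R) w) 0; last by left.
  have [q0|] := eqVneq (map_mx (@complex.Im R) w) 0; last by right.
  exfalso; move/eqP: w0; apply; apply/matrixP => i j; rewrite [i in w i j]ord1 mxE.
  have := congr1 (fun A : 'rV__ => A 0 j) p0; have := congr1 (fun A : 'rV__ => A 0 j) q0.
  rewrite !mxE; case: (w 0 j) => a b /= -> ->; by [].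
- apply/rowP => j; have := congr1 (@complex.Re R) (Hj j).
  rewrite !mxE (big_morph (@complex.Re R) ReD Re0) ReM => <-.
  by apply: eq_bigr => i _; rewrite ReM /= mulr0 subr0 mxE.
- apply/rowP => j; have := congr1 (@complex.Im R) (Hj j).
  rewrite !mxE (big_morph (@complex.Im R) ImD Im0) ImM addrC => <-.
  by apply: eq_bigr => i _; rewrite ImM /= mxE mulr0 add0r.
Qed.
Lemma tr11 (X : 'M[R]_1) : X^T = X.
Proof. by apply/matrixP => i j; rewrite !ord1 mxE. Qed.

Lemma dotE m (v : 'rV[R]_m) : (v *m v^T) 0 0 = \sum_i v 0 i ^+ 2.
Proof. by rewrite mxE; apply: eq_bigr => i _; rewrite mxE expr2. Qed.

Lemma dot_ge0 m (v : 'rV[R]_m) : 0 <= (v *m v^T) 0 0.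
Proof. by rewrite dotE sumr_ge0 // => i _; rewrite sqr_ge0. Qed.

Lemma dot_eq0 m (v : 'rV[R]_m) : ((v *m v^T) 0 0 == 0) = (v == 0).
Proof.
apply/idP/idP => [|/eqP->]; last by rewrite mul0mx mxE.
rewrite dotE => /eqP /psumr_eq0P H; apply/eqP/rowP => i; rewrite mxE.
by apply/eqP; rewrite -sqrf_eq0; apply/eqP/H => // j _; rewrite sqr_ge0.
Qed.

Lemma sym_eig m (H : 'M[R]_m) k (E : 'M[R]_(k,m)) : H^T = H -> E != 0 ->
  (E *m H <= E)%MS -> exists a (u : 'rV_m), u != 0 /\ (u <= E)%MS /\ u *m H = a *: u.
Proof.
move=> sH E0 sE.
set rb := row_base E.
have r0 : (0 < \rank E)%N by rewrite lt0n mxrank_eq0.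
have hrb : (rb *m H <= rb)%MS by rewrite stablemx_row_base.
set M := rb *m H *m pinvmx rb.
have hM : M *m rb = rb *m H by rewrite mulmxKpV.
have [a [b [p [q [pq0 [hp hq]]]]]] := cplx_eig M r0.
set P := p *m rb; set Q := q *m rb.
have hP : P *m H = a *: P - b *: Q by rewrite /P -mulmxA -hM mulmxA hp mulmxBl !scalemxAl.
have hQ : Q *m H = b *: P + a *: Q by rewrite /Q -mulmxA -hM mulmxA hq mulmxDl !scalemxAl.
have PQ0 : P != 0 \/ Q != 0.
  by rewrite /P /Q !mulmx_free_eq0 ?row_base_free.
have PE : (P <= E)%MS by rewrite -(eq_row_base E) submxMl.
have QE : (Q <= E)%MS by rewrite -(eq_row_base E) submxMl.
clearbody P Q.
have e1 : P *m H *m Q^T = (Q *m H *m P^T)^T by rewrite !trmx_mul trmxK sH mulmxA.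
rewrite hP hQ tr11 !mulmxBl !mulmxDl -!scalemxAl in e1.
have e2 : (Q *m P^T) = (P *m Q^T) by rewrite -[LHS]tr11 trmx_mul trmxK.
rewrite e2 in e1.
have e3 : b * ((P *m P^T) 0 0 + (Q *m Q^T) 0 0) = 0.
  move: (congr1 (fun X : 'M_1 => X 0 0) e1) => /=.
  move: (P *m P^T) (P *m Q^T) (Q *m Q^T) => z x y; rewrite !mxE => e4.
  have -> : b * (z 0 0 + y 0 0) =
    (b * z 0 0 + a * x 0 0) - (a * x 0 0 - b * y 0 0) by ring.
  by rewrite e4 subrr.
have b0 : b = 0.
  move/eqP: e3; rewrite mulf_eq0 => /orP [/eqP //|].
  rewrite paddr_eq0 ?dot_ge0 // !dot_eq0 => /andP [/eqP P0 /eqP Q0].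
  by case: PQ0; rewrite ?P0 ?Q0 eqxx.
exists a; case: PQ0 => [P0|Q0].
  by exists P; rewrite hP b0 scale0r subr0.
by exists Q; rewrite hQ b0 scale0r add0r.
Qed.

Lemma common_eig m (I : eqType) (Hf : I -> 'M[R]_m) (s : seq I) k (E : 'M[R]_(k,m)) :
  (forall i, (Hf i)^T = Hf i) -> (forall i j, Hf i *m Hf j = Hf j *m Hf i) ->
  E != 0 -> (forall i, (E *m Hf i <= E)%MS) ->
  exists u : 'rV_m, u != 0 /\ (u <= E)%MS /\
    forall i, i \in s -> exists a, u *m Hf i = a *: u.
Proof.
move=> sH cH; elim: s k E => [|i s IH] k E E0 sE.
  by have [u uE u0] := rowV0Pn E0; exists u.
have [a [u0 [u00 [u0E hu0]]]] := sym_eig (sH i) E0 (sE i).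
have u0E' : (u0 <= E :&: eigenspace (Hf i) a)%MS.
  by rewrite sub_capmx u0E; apply/eigenspaceP.
have E'0 : (E :&: eigenspace (Hf i) a)%MS != 0.
  by apply/eqP => E0'; move: u0E'; rewrite E0' submx0 (negbTE u00).
have sE' : forall j, ((E :&: eigenspace (Hf i) a)%MS *m Hf j <= (E :&: eigenspace (Hf i) a))%MS.
  move=> j; rewrite sub_capmx; apply/andP; split.
    by apply: submx_trans (sE j); apply: submxMr; apply: capmxSl.
  apply: submx_trans (comm_mx_stable_eigenspace a (cH i j)).
  by apply: submxMr; apply: capmxSr.
have [u [u0' [uE' hu]]] := IH _ _ E'0 sE'.
exists u; split => //; split.
  by apply: submx_trans uE' _; apply: capmxSl.
move=> j; rewrite inE => /orP [/eqP ->|js]; last exact: hu.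
exists a; apply/eigenspaceP; apply: submx_trans uE' _; apply: capmxSr.
Qed.

Lemma mxEB p q (A B : 'M[R]_(p,q)) i j : (A - B) i j = A i j - B i j. Proof. by rewrite !mxE. Qed.
Lemma mxED p q (A B : 'M[R]_(p,q)) i j : (A + B) i j = A i j + B i j. Proof. by rewrite !mxE. Qed.
Lemma mxEZ p q a (A : 'M[R]_(p,q)) i j : (a *: A) i j = a * A i j. Proof. by rewrite !mxE. Qed.

Lemma householder m (u : 'rV[R]_m.+1) : u *m u^T = 1 ->
  exists P : 'M[R]_m.+1, P *m P^T = 1 /\ delta_mx 0 0 *m P = u.
Proof.
move=> uu.
set e : 'rV[R]_m.+1 := delta_mx 0 0.
set w := u - e.
set c := (w *m w^T) 0 0.
set X := w^T *m w.
exists (1 - (2 / c) *: X).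
have ew : (e *m w^T) 0 0 = w 0 0 by rewrite /e -rowE !mxE.
have ee : (e *m e^T) 0 0 = 1 by rewrite /e -rowE !mxE.
have eu : (e *m u^T) 0 0 = u 0 0 by rewrite /e -rowE !mxE.
have ue : (u *m e^T) 0 0 = u 0 0 by rewrite -[u *m e^T]trmxK trmx_mul trmxK tr11 eu.
have w00 : w 0 0 = u 0 0 - 1 by rewrite /w /e mxEB !mxE.
have hc : c = - 2 * w 0 0.
  rewrite /c /w linearB /= mulmxBl !mulmxBr !mxEB -/e uu eu ue ee /e !mxE /=; ring.
have XX : X *m X = c *: X.
  by rewrite /X mulmxA -(mulmxA _ w) [w *m w^T]mx11_scalar -/c mul_mx_scalar -scalemxAl.
have XT : X^T = X by rewrite /X trmx_mul trmxK.
have [c0|c0] := eqVneq c 0.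
  have w0 : w = 0 by apply/eqP; rewrite -dot_eq0 -/c c0.
  rewrite c0 invr0 mulr0 scale0r subr0 trmx1 mulmx1; split => //.
  by rewrite mulmx1; apply/eqP; rewrite eq_sym -subr_eq0 -/w w0.
split.
  have PT : (1 - (2 / c) *: X)^T = 1 - (2 / c) *: X by rewrite raddfB /= trmx1 linearZ /= XT.
  rewrite PT mulmxBl mulmxBr !mulmx1 mul1mx mulmxBr mulmx1 -scalemxAl -scalemxAr XX !scalerA.
  have -> : 2 / c * (2 / c) * c = 2 / c + 2 / c by field.
  by rewrite scalerDl opprB addrK subrK.
rewrite mulmxBr mulmx1 -scalemxAr /X mulmxA [e *m _]mx11_scalar ew mul_scalar_mx scalerA.
have w0 : w 0 0 != 0 by apply: contraNneq c0 => w0; rewrite hc w0 mulr0.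
rewrite hc; have -> : 2 / (-2 * w 0 0) * w 0 0 = -1.
  by field.
by rewrite scaleNr scale1r opprK /w addrC subrK.
Qed.

Definition dd m (x y : 'rV[R]_m) := (x *m y^T) 0 0.

Lemma comm_S m p (Z : 'I_p -> 'M[R]_m)
  (E1 : forall a b, Z a *m (Z b)^T = Z b *m (Z a)^T)
  (E2 : forall a b, (Z a)^T *m Z b = (Z b)^T *m Z a) k l i j :
  Z k *m (Z l)^T *m (Z i *m (Z j)^T) = Z i *m (Z j)^T *m (Z k *m (Z l)^T).
Proof.
rewrite !mulmxA -(mulmxA (Z k)) E2 mulmxA E1 -(mulmxA (Z i)) E2 mulmxA.
rewrite -(mulmxA (Z i)) (E2 l k) mulmxA -(mulmxA _ (Z l)) (E1 l j) mulmxA.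
by rewrite -(mulmxA (Z i)) (E2 k j) mulmxA.
Qed.

Lemma dd_sym m (x y : 'rV[R]_m) : dd x y = dd y x.
Proof. by rewrite /dd -[x *m y^T]tr11 trmx_mul trmxK. Qed.

Lemma ddZl m a (x y : 'rV[R]_m) : dd (a *: x) y = a * dd x y.
Proof. by rewrite /dd -scalemxAl mxEZ. Qed.
Lemma ddZr m a (x y : 'rV[R]_m) : dd x (a *: y) = a * dd x y.
Proof. by rewrite /dd linearZ /= -scalemxAr mxEZ. Qed.
Lemma ddBl m (x y z : 'rV[R]_m) : dd (x - y) z = dd x z - dd y z.
Proof. by rewrite /dd mulmxBl mxEB. Qed.
Lemma ddBr m (x y z : 'rV[R]_m) : dd x (y - z) = dd x y - dd x z.
Proof. by rewrite /dd linearB /= mulmxBr mxEB. Qed.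

Lemma dd1 m (x : 'rV[R]_m) : dd x x = 1 -> x *m x^T = 1.
Proof. by move=> h; rewrite [LHS]mx11_scalar; rewrite /dd in h; rewrite h. Qed.

Lemma normalize m (x : 'rV[R]_m) : 0 < dd x x ->
  ((Num.sqrt (dd x x))^-1 *: x) *m ((Num.sqrt (dd x x))^-1 *: x)^T = 1.
Proof.
move=> g0; apply: dd1; rewrite ddZl ddZr.
have s0 : Num.sqrt (dd x x) != 0 by rewrite gt_eqF // sqrtr_gt0.
rewrite -{3}(sqr_sqrtr (ltW g0)); field; exact: s0.
Qed.

Lemma ZZt0 m n (Z : 'M[R]_(m,n)) : Z *m Z^T = 0 -> Z = 0.
Proof.
move=> h; apply/row_matrixP => i; rewrite row0; apply/eqP; rewrite -dot_eq0.
have -> : (row i Z *m (row i Z)^T) 0 0 = (Z *m Z^T) i i.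
  by rewrite !mxE; apply: eq_bigr => j _; rewrite !mxE.
by rewrite h mxE.
Qed.

Lemma step m p (Z : 'I_p -> 'M[R]_m)
  (E1 : forall a b, Z a *m (Z b)^T = Z b *m (Z a)^T)
  (E2 : forall a b, (Z a)^T *m Z b = (Z b)^T *m Z a) k0 : Z k0 != 0 ->
  exists (u v : 'rV_m) (d : 'I_p -> R), u *m u^T = 1 /\ v *m v^T = 1 /\
    (forall k, u *m Z k = d k *: v) /\ (forall k, v *m (Z k)^T = d k *: u).
Proof.
move=> Zk0.
pose S (x : 'I_p * 'I_p) := Z x.1 *m (Z x.2)^T.
have sS x : (S x)^T = S x by rewrite /S trmx_mul trmxK E1.
have cS x y : S x *m S y = S y *m S x by rewrite /S comm_S.
have E0 : S (k0, k0) != 0 by apply: contra Zk0 => /eqP/ZZt0 ->.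
have stab x : (S (k0,k0) *m S x <= S (k0,k0))%MS by rewrite cS submxMl.
have [u0 [u00 [u0E hu0]]] := common_eig (enum {: 'I_p * 'I_p}) sS cS E0 stab.
have N0 : 0 < dd u0 u0 by rewrite lt_def dot_eq0 u00 dot_ge0.
set u := (Num.sqrt (dd u0 u0))^-1 *: u0.
have uu : u *m u^T = 1 by apply: normalize.
have uE : (u <= S (k0,k0))%MS by apply: scalemx_sub.
have hu x : exists a, u *m S x = a *: u.
  have [a ha] := hu0 x (mem_enum _ x); exists a.
  by rewrite /u -scalemxAl ha !scalerA mulrC.
clearbody u.
have uu1 : dd u u = 1 by rewrite /dd uu mxE.
pose lam k l := dd (u *m Z k) (u *m Z l).
have hlam k l : u *m S (k, l) = lam k l *: u.
  have [a ha] := hu (k, l); suff -> : lam k l = a by [].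
  rewrite /lam /dd trmx_mul mulmxA -(mulmxA u) -/(S (k,l)) ha -scalemxAl mxEZ.
  by rewrite -/(dd u u) uu1 mulr1.
have lamS k l : lam k l = lam l k by rewrite /lam dd_sym.
have lamF k l : lam k k * lam l l = lam k l ^+ 2.
  have e : S (k, k) *m S (l, l) = S (k, l) *m S (k, l).
    by rewrite /S /= !mulmxA -(mulmxA (Z k) (Z k)^T) E2 !mulmxA.
  have := congr1 (fun M => dd (u *m M) u) e.
  rewrite /= (mulmxA u (S (k,k))) (mulmxA u (S (k,l))) !hlam -!scalemxAl !hlam !scalerA !ddZl uu1 !mulr1.
  by rewrite expr2 mulrC => ->.
set g := lam k0 k0.
have g0 : g != 0.
  apply/eqP => g0; have [D hD] := submxP uE.
  have : u *m S (k0, k0) = 0 by rewrite hlam -/g g0 scale0r.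
  move=> uS; have : u *m u^T = D *m (u *m S (k0,k0))^T by rewrite trmx_mul sS mulmxA -hD.
  by rewrite uS trmx0 mulmx0 uu => /eqP; rewrite oner_eq0.
have gp : 0 < g by rewrite lt_def g0 /g /lam dot_ge0.
set w := u *m Z k0.
have gw : g = dd w w by [].
set s := Num.sqrt g.
have s0 : s != 0 by rewrite gt_eqF // sqrtr_gt0.
have s2 : s ^+ 2 = g by rewrite sqr_sqrtr // ltW.
exists u, (s^-1 *: w), (fun k => lam k0 k / s).
split => //; split; first by rewrite /s gw; apply: normalize; rewrite -gw.
split => k; last first.
  rewrite -scalemxAl /w -mulmxA -/(S (k0, k)) hlam scalerA; congr (_ *: _).
  by rewrite mulrC.
set x := u *m Z k - (lam k0 k / g) *: w.
have xx : dd x x = 0.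
  rewrite /x !ddBl !ddBr !ddZl !ddZr -gw.
  have -> : dd (u *m Z k) (u *m Z k) = lam k k by [].
  have -> : dd (u *m Z k) w = lam k k0 by [].
  have -> : dd w (u *m Z k) = lam k0 k by [].
  have hk : lam k k = lam k0 k ^+ 2 / g.
    by rewrite (lamS k0 k) -lamF -/g mulrK // unitfE.
  rewrite hk (lamS k k0); field; exact: g0.
move/eqP: xx; rewrite dot_eq0 subr_eq0 => /eqP ->.
rewrite scalerA; congr (_ *: _); rewrite -s2; field; exact: s0.
Qed.

Lemma blkM m (a b : R) (X Y : 'M[R]_m) :
  block_mx a%:M 0 0 X *m block_mx b%:M 0 0 Y = block_mx (a*b)%:M 0 0 (X *m Y) :> 'M_(1+m).
Proof. by rewrite mulmx_block !mulmx0 !mul0mx !addr0 add0r -scalar_mxM. Qed.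

Lemma blkT m (a : R) (X : 'M[R]_m) :
  (block_mx a%:M 0 0 X)^T = block_mx a%:M 0 0 X^T :> 'M_(1+m).
Proof. by rewrite tr_block_mx !trmx0 tr_scalar_mx. Qed.

Lemma core m : forall p (Z : 'I_p -> 'M[R]_m),
  (forall a b, Z a *m (Z b)^T = Z b *m (Z a)^T) ->
  (forall a b, (Z a)^T *m Z b = (Z b)^T *m Z a) ->
  exists A B : 'M[R]_m, A *m A^T = 1 /\ B *m B^T = 1 /\
    forall k, is_diag_mx (A *m Z k *m B^T).
Proof.
elim: m => [|m IH] p Z E1 E2.
  exists 1, 1; rewrite trmx1 mulmx1; do 2!split => //.
  by move=> k; apply/is_diag_mxP => -[].
have [Z0|] := boolP [forall k, Z k == 0].
  exists 1, 1; rewrite trmx1 mulmx1; do 2!split => //.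
  by move=> k; rewrite (eqP (forallP Z0 k)) mulmx0 mul0mx mx0_is_diag.
rewrite negb_forall => /existsP [k0 Zk0].
have [u [v [d [uu [vv [hu hv]]]]]] := step E1 E2 Zk0.
have [P [PP eP]] := householder uu.
have [Q [QQ eQ]] := householder vv.
have QQ' : Q^T *m Q = 1 := mulmx1C QQ.
have PP' : P^T *m P = 1 := mulmx1C PP.
set e : 'rV[R]_m.+1 := delta_mx 0 0.
pose Y k := P *m Z k *m Q^T.
have Yr k : e *m Y k = d k *: e.
  by rewrite /Y !mulmxA eP hu -scalemxAl -eQ -mulmxA QQ mulmx1.
have Yc k : Y k *m e^T = d k *: e^T.
  have hv' : Z k *m v^T = d k *: u^T by rewrite -[Z k]trmxK -trmx_mul hv linearZ.
  by rewrite /Y -mulmxA -trmx_mul eQ -mulmxA hv' -eP trmx_mul -scalemxAr mulmxA PP mul1mx.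
have Ydef k : Y k = P *m Z k *m Q^T by [].
clearbody Y.
have Yr0 k j : Y k 0 j = d k * e 0 j.
  by have := congr1 (fun M : 'rV__ => M 0 j) (Yr k); rewrite /= -rowE mxEZ mxE.
have Yc0 k i : Y k i 0 = d k * e 0 i.
  have := congr1 (fun M : 'cV__ => M i 0) (Yc k); rewrite /= mxEZ [e^T]trmx_delta -colE !mxE.
  by move=> ->; rewrite andbC.
have l0 : lshift m (0 : 'I_1) = 0 by apply: val_inj.
have rn0 j : e 0 (rshift 1 j) = 0 by rewrite /e mxE.
pose Z' k := drsubmx (Y k : 'M_(1+m)).
have hY k : (Y k : 'M_(1+m)) = block_mx (d k)%:M 0 0 (Z' k).
  rewrite -[Y k : 'M_(1+m)](@submxK _ 1 m 1 m); congr block_mx.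
  - by apply/matrixP => i j; rewrite !ord1 !mxE l0 Yr0 /e !mxE /= mulr1.
  - by apply/matrixP => i j; rewrite !ord1 !mxE l0 Yr0 rn0 mulr0.
  - by apply/matrixP => i j; rewrite !ord1 !mxE l0 Yc0 rn0 mulr0.
have YYt a b : Y a *m (Y b)^T = P *m (Z a *m (Z b)^T) *m P^T.
  by rewrite !Ydef !trmx_mul trmxK !mulmxA -(mulmxA _ Q^T Q) QQ' mulmx1.
have YtY a b : (Y a)^T *m Y b = Q *m ((Z a)^T *m Z b) *m Q^T.
  by rewrite !Ydef !trmx_mul trmxK !mulmxA -(mulmxA _ P^T P) PP' mulmx1.
have E1' a b : Z' a *m (Z' b)^T = Z' b *m (Z' a)^T.
  have := congr1 (@drsubmx _ 1 m 1 m) (etrans (YYt a b) (esym (etrans (YYt b a) (congr1 (fun M => P *m M *m P^T) (E1 b a))))).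
  by rewrite !hY !blkT !blkM !block_mxKdr.
have E2' a b : (Z' a)^T *m Z' b = (Z' b)^T *m Z' a.
  have := congr1 (@drsubmx _ 1 m 1 m) (etrans (YtY a b) (esym (etrans (YtY b a) (congr1 (fun M => Q *m M *m Q^T) (E2 b a))))).
  by rewrite !hY !blkT !blkM !block_mxKdr.
have [A' [B' [AA [BB hD]]]] := IH p Z' E1' E2'.
exists (block_mx (1%:M : 'M_1) 0 0 A' *m P), (block_mx (1%:M : 'M_1) 0 0 B' *m Q).
split; last split.
- by rewrite trmx_mul -mulmxA [P *m _]mulmxA PP mul1mx blkT blkM AA mulr1 -scalar_mx_block.
- by rewrite trmx_mul -mulmxA [Q *m _]mulmxA QQ mul1mx blkT blkM BB mulr1 -scalar_mx_block.
move=> k.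
have -> : block_mx (1%:M : 'M_1) 0 0 A' *m P *m Z k *m (block_mx (1%:M : 'M_1) 0 0 B' *m Q)^T =
   block_mx (1%:M : 'M_1) 0 0 A' *m Y k *m (block_mx (1%:M : 'M_1) 0 0 B')^T.
  by rewrite Ydef trmx_mul !mulmxA.
rewrite hY blkT !blkM mul1r mulr1.
have h := @is_diag_block_mx _ 1 m 1 m (d k)%:M 0 0 (A' *m Z' k *m B'^T) erefl.
by rewrite !eqxx mx11_is_diag hD /= in h; exact: h.
Qed.

Lemma sum3 n (f g h : 'I_n -> R) (a : R): a * (\sum_i f i) * (\sum_j g j) * (\sum_k h k) = \sum_i \sum_j \sum_k a * f i * g j * h k.
Proof.
rewrite [a * _]big_distrr /= [(\sum_i _) * _]big_distrl /= big_distrl /=.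
apply: eq_bigr => i _; rewrite -mulrA [(\sum_j g j) * _]big_distrl big_distrr /=.
apply: eq_bigr => j _; rewrite !big_distrr /=.
by apply: eq_bigr => k _; rewrite !mulrA.
Qed.

Lemma diagE n (alpha : 'I_n -> R) (A B C : 'M[R]_n) x y z :
  diag_trilin alpha (A *m x) (B *m y) (C *m z) =
  trilin (fun i j k => \sum_l alpha l * A l i * B l j * C l k) x y z.
Proof.
rewrite /diag_trilin /trilin.
under eq_bigr do rewrite !mxE sum3.
rewrite exchange_big; apply: eq_bigr => i _.
rewrite exchange_big; apply: eq_bigr => j _.
rewrite exchange_big; apply: eq_bigr => k _.
by rewrite !big_distrl; apply: eq_bigr => l _ /=; ring.
Qed.

Lemma trilin_delta n (T : 'I_n -> 'I_n -> 'I_n -> R) i0 j0 k0 :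
  trilin T (delta_mx i0 0) (delta_mx j0 0) (delta_mx k0 0) = T i0 j0 k0.
Proof.
rewrite /trilin (bigD1 i0) //= [X in _ + X]big1 ?addr0 => [|i ni]; last first.
  by rewrite big1 // => j _; rewrite big1 // => k _; rewrite [delta_mx i0 0 i 0]mxE (negbTE ni) /= mulr0 !mul0r.
rewrite (bigD1 j0) //= [X in _ + X]big1 ?addr0 => [|j nj]; last first.
  by rewrite big1 // => k _; rewrite [delta_mx j0 0 j 0]mxE (negbTE nj) /= mulr0 mul0r.
rewrite (bigD1 k0) //= [X in _ + X]big1 ?addr0 => [|k nk]; last first.
  by rewrite [delta_mx k0 0 k 0]mxE (negbTE nk) /= mulr0.
by rewrite !mxE !eqxx /= !mulr1.
Qed.

Lemma symfact n (N M : 'M[R]_n) (d1 d2 : 'rV[R]_n) : M *m M^T = 1 ->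
  (N^T *m diag_mx d1 *m M *m (N^T *m diag_mx d2 *m M)^T)^T =
  N^T *m diag_mx d1 *m M *m (N^T *m diag_mx d2 *m M)^T.
Proof.
move=> MM.
have -> : N^T *m diag_mx d1 *m M *m (N^T *m diag_mx d2 *m M)^T =
   N^T *m (diag_mx d1 *m diag_mx d2) *m N.
  by rewrite !trmx_mul trmxK tr_diag_mx !mulmxA -(mulmxA _ M) MM mulmx1.
by rewrite !trmx_mul trmxK !tr_diag_mx -!mulmxA (mulmxA (diag_mx d2)) diag_mxC -mulmxA.
Qed.
End C.

Unset Implicit Arguments.
Set Strict Implicit.

Theorem proposition34 (R : rcfType) (n : nat) (T : 'I_n -> 'I_n -> 'I_n -> R) :
  (exists (A B C : 'M[R]_n) (alpha : 'I_n -> R),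
      orthogonal_mx A /\ orthogonal_mx B /\
      forall x y z : 'cV[R]_n,
        trilin T x y z = diag_trilin alpha (A *m x) (B *m y) (C *m z))
  <->
  (forall k l : 'I_n,
      symmetric_mx (zslice T k *m (zslice T l)^T) /\
      symmetric_mx ((zslice T k)^T *m zslice T l)).
Proof.
split.
  move=> [A [B [C [alpha [oA [oB hid]]]]]].
  have AA : A *m A^T = 1 := mulmx1C oA.
  have BB : B *m B^T = 1 := mulmx1C oB.
  have hT i j k : T i j k = \sum_l alpha l * A l i * B l j * C l k.
    by have := hid (delta_mx i 0) (delta_mx j 0) (delta_mx k 0); rewrite diagE !trilin_delta.
  pose d k : 'rV[R]_n := \row_l (alpha l * C l k).
  have hZ k : zslice T k = A^T *m diag_mx (d k) *m B.
    apply/matrixP => i j; rewrite -mulmxA mul_diag_mx !mxE hT.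
    by apply: eq_bigr => l _; rewrite !mxE; ring.
  have hZ' k : zslice T k = (B^T *m diag_mx (d k) *m A)^T.
    by rewrite hZ !trmx_mul trmxK tr_diag_mx mulmxA.
  move=> k l; rewrite /symmetric_mx; split.
    by rewrite !hZ; apply: symfact.
  by rewrite !hZ' trmxK; apply: symfact.
move=> h.
have E1 a b : zslice T a *m (zslice T b)^T = zslice T b *m (zslice T a)^T.
  by rewrite -[LHS](proj1 (h a b)) trmx_mul trmxK.
have E2 a b : (zslice T a)^T *m zslice T b = (zslice T b)^T *m zslice T a.
  by rewrite -[LHS](proj2 (h a b)) trmx_mul trmxK.
have [A [B [AA [BB hD]]]] := core E1 E2.
pose D k := A *m zslice T k *m B^T.
exists A, B, (\matrix_(l, k) D k l l), (fun _ => 1).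
split; first exact: mulmx1C.
split; first exact: mulmx1C.
move=> x y z; rewrite diagE /trilin.
apply: eq_bigr => i _; apply: eq_bigr => j _; apply: eq_bigr => k _.
congr (_ * _ * _ * _).
have hZ : zslice T k = A^T *m D k *m B.
  by rewrite /D !mulmxA (mulmx1C AA) mul1mx -mulmxA (mulmx1C BB) mulmx1.
have hDd : is_diag_mx (D k) by exact: hD.
clearbody D.
have hDk : D k = diag_mx (\row_l D k l l).
  apply/matrixP => a b; rewrite !mxE; have [->|ab] := eqVneq a b; first by rewrite ?eqxx mulr1n.
  by rewrite ?(negbTE ab) ?mulr0n; move/is_diag_mxP: hDd => /(_ a b); apply.
have := congr1 (fun M : 'M_n => M i j) hZ; rewrite /= hDk -mulmxA mul_diag_mx !mxE => ->.
by apply: eq_bigr => l _; rewrite !mxE mul1r; ring.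
Qed.
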